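(* Let $A_1,\dots,A_n,B_1,\dots,B_n$ be positive definite matrices with $mI\le A_i,B_i\le MI$ for all $i$ and some scalars $0<m<M$, and put $h=M/m$. Then for all $p\in(-\infty,1]\setminus\{0\}$, \[K(h,p)^{1/p}\Big(\mathrm{Tr}\Big[\Big(\sum_{i=1}^nA_i^p\Big)^{1/p}\Big]+\mathrm{Tr}\Big[\Big(\sum_{i=1}^nB_i^p\Big)^{1/p}\Big]\Big)\le\mathrm{Tr}\Big[\Big(\sum_{i=1}^n(A_i+B_i)^p\Big)^{1/p}\Big]\le K(h,p)^{-1/p}\Big(\mathrm{Tr}\Big[\Big(\sum_{i=1}^nA_i^p\Big)^{1/p}\Big]+\mathrm{Tr}\Big[\Big(\sum_{i=1}^nB_i^p\Big)^{1/p}\Big]\Big),\] and for all $p\ge1$, \[K(h,p)^{-1/p}\Big(\mathrm{Tr}\Big[\Big(\sum_{i=1}^nA_i^p\Big)^{1/p}\Big]+\mathrm{Tr}\Big[\Big(\sum_{i=1}^nB_i^p\Big)^{1/p}\Big]\Big)\le\mathrm{Tr}\Big[\Big(\sum_{i=1}^n(A_i+B_i)^p\Big)^{1/p}\Big]\le K(h,p)^{1/p}\Big(\mathrm{Tr}\Big[\Big(\sum_{i=1}^nA_i^p\Big)^{1/p}\Big]+\mathrm{Tr}\Big[\Big(\sum_{i=1}^nB_i^p\Big)^{1/p}\Big]\Big).\]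
   Context: $\mathrm{Tr}$ is the trace, $\le$ the Löwner order. Generalized Kantorovich constant: $K(h,p)=\frac{h^p-h}{(p-1)(h-1)}\Big(\frac{p-1}{p}\frac{h^p-1}{h^p-h}\Big)^p$ (with $K(h,1)=1$ by continuity). *)

(* Defs.v *)
From HB Require Import structures.
From mathcomp Require Import all_boot all_order all_algebra.
From mathcomp Require Import all_classical all_reals all_analysis.
From mathcomp Require Import complex.
Set Implicit Arguments. Unset Strict Implicit. Unset Printing Implicit Defensive.
Import Order.TTheory GRing.Theory Num.Theory Num.Def.
Local Open Scope ring_scope.
Local Open Scope sesquilinear_scope.

Definition ofR (R : realType) (x : R) : R[i] := Complex x 0.

Definition hermitian (R : realType) (d : nat) (A : 'M[R[i]]_d) : Prop :=
  A \is hermsymmx.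

Definition psdmx (R : realType) (d : nat) (A : 'M[R[i]]_d) : Prop :=
  hermitian A /\ forall v : 'rV[R[i]]_d, 0 <= (v *m A *m (v ^t conjC)) 0 0.

Definition pdmx (R : realType) (d : nat) (A : 'M[R[i]]_d) : Prop :=
  hermitian A /\
  forall v : 'rV[R[i]]_d, v != 0 -> 0 < (v *m A *m (v ^t conjC)) 0 0.

Definition loewner_le (R : realType) (d : nat) (A B : 'M[R[i]]_d) : Prop :=
  psdmx (B - A).

(* Real power A^p of a (positive definite) Hermitian matrix, via the
   functional calculus: with the library's spectral decomposition
   A = U^-1 diag(lambda) U (U unitary), A^p := U^-1 diag(lambda^p) U. *)
Definition mpow (R : realType) (d : nat) (A : 'M[R[i]]_d) (p : R) : 'M[R[i]]_d :=
  let U := spectralmx A in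
  let lam := spectral_diag A in
  invmx U *m diag_mx (\row_j ofR (powR (complex.Re (lam 0 j)) p)) *m U.

Definition Kant (R : realType) (h p : R) : R :=
  if p == 1 then 1 else
  (powR h p - h) / ((p - 1) * (h - 1)) *
  powR ((p - 1) / p * ((powR h p - 1) / (powR h p - h))) p.

Definition trpow (R : realType) (d n : nat) (A : 'I_n -> 'M[R[i]]_d) (p : R) : R[i] :=
  \tr (mpow (\sum_(i < n) mpow (A i) p) p^-1).

(* Main.v *)
Require Import Defs.
From HB Require Import structures.
From mathcomp Require Import all_boot all_order all_algebra.
From mathcomp Require Import all_classical all_reals all_analysis.
From mathcomp Require Import complex.
Import Order.TTheory GRing.Theory Num.Theory.
Local Open Scope ring_scope.
From mathcomp Require Import ring lra.
Set Implicit Arguments. Unset Strict Implicit.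
Local Open Scope sesquilinear_scope.


Section Scalar.
Variable R : realType.
Implicit Types p r x t a b h : R.

Lemma bern_ge1 p r : 1 <= p -> 0 < r -> 1 + p * (r - 1) <= r `^ p.
Proof.
move=> p1 r0.
have [->|p1'] := eqVneq p 1.
  rewrite powRr1; [lra | exact: ltW].
have pgt1 : 1 < p by rewrite lt_neqAle eq_sym p1' p1.
have p0 : 0 < p by lra.
have q0 : 0 < p / (p - 1) by apply: divr_gt0; lra.
have := @conjugate_powR R r 1 p (p / (p - 1)) (ltW r0) ler01 p0 q0.
rewrite powR1 mulr1.
have -> : p^-1 + (p / (p - 1))^-1 = 1.
  by field; apply/andP; split; apply/negP => /eqP; lra.
move=> /(_ erefl) H.
have e : (p / (p - 1))^-1 = (p - 1) / p.
  by rewrite invf_div.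
rewrite e in H.
have : p * r <= r `^ p + (p - 1).
  have := ler_wpM2l (ltW p0) H.
  have -> : p * (r `^ p / p + 1 * ((p - 1) / p)) = r `^ p + (p - 1).
    by field; apply/negP => /eqP; lra.
  by [].
lra.
Qed.

Lemma bern_lt0 p r : p < 0 -> 0 < r -> 1 + p * (r - 1) <= r `^ p.
Proof.
move=> p0 r0.
have P0 : 0 < 1 - p by lra.
have Q0 : 0 < (1 - p) / (- p) by apply: divr_gt0; lra.
have := @conjugate_powR R (r `^ (p / (1 - p))) (r `^ (- p / (1 - p))) (1 - p)
  ((1 - p) / (- p)) (powR_ge0 _ _) (powR_ge0 _ _) P0 Q0.
have -> : (1 - p)^-1 + ((1 - p) / - p)^-1 = 1.
  by field; apply/andP; split; apply/negP => /eqP; lra.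
move=> /(_ erefl).
rewrite -powRD; last by apply/implyP => _; rewrite gt_eqF.
rewrite -!powRrM.
have -> : p / (1 - p) + - p / (1 - p) = 0 by field; apply/negP => /eqP; lra.
have -> : p / (1 - p) * (1 - p) = p by field; apply/negP => /eqP; lra.
have -> : - p / (1 - p) * ((1 - p) / - p) = 1.
  by field; apply/andP; split; apply/negP => /eqP; lra.
rewrite powRr0 powRr1 ?(ltW r0) // invf_div => H.
have : 1 - p <= r `^ p + (- p) * r.
  have := ler_wpM2l (ltW P0) H.
  have -> : (1 - p) * (r `^ p / (1 - p) + r * (- p / (1 - p))) = r `^ p + (- p) * r.
    by field; apply/negP => /eqP; lra.
  by rewrite mulr1.
lra.
Qed.

Lemma bern_ccv p r : 0 < p < 1 -> 0 <= r -> r `^ p <= 1 + p * (r - 1).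
Proof.
move=> /andP[p0 p1] r0.
have P0 : 0 < p^-1 by rewrite invr_gt0.
have Q0 : 0 < (1 - p)^-1 by rewrite invr_gt0; lra.
have := @conjugate_powR R (r `^ p) 1 p^-1 (1 - p)^-1 (powR_ge0 _ _) ler01 P0 Q0.
rewrite !invrK -powRrM mulfV ?gt_eqF // powRr1 // powR1 mulr1.
move=> /(_ ltac:(lra)) H; apply: (le_trans H); lra.
Qed.

Definition cvx p := (p < 0) || (1 <= p).

Lemma bern_cvx p r : cvx p -> 0 < r -> 1 + p * (r - 1) <= r `^ p.
Proof. by case/orP => [/bern_lt0|/bern_ge1]; apply. Qed.

Lemma tan_cvx p x t : cvx p -> 0 < x -> 0 < t ->
  t `^ p + p * t `^ p * (x - t) / t <= x `^ p.
Proof.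
move=> cp x0 t0.
have e : x = t * (x / t) by field; rewrite gt_eqF.
rewrite [X in _ <= X `^ _]e powRM; [|exact: ltW|exact: ltW (divr_gt0 x0 t0)].
have := @bern_cvx p (x / t) cp (divr_gt0 x0 t0).
move=> /(ler_wpM2l (powR_ge0 t p)).
have -> : t `^ p * (1 + p * (x / t - 1)) = t `^ p + p * t `^ p * (x - t) / t.
  by field; rewrite gt_eqF.
by [].
Qed.

Lemma tan_ccv p x t : 0 < p < 1 -> 0 <= x -> 0 < t ->
  x `^ p <= t `^ p + p * t `^ p * (x - t) / t.
Proof.
move=> cp x0 t0.
have e : x = t * (x / t) by field; rewrite gt_eqF.
rewrite [X in X `^ _ <= _]e powRM; [|exact: ltW|exact: divr_ge0 x0 (ltW t0)].
have := @bern_ccv p (x / t) cp (divr_ge0 x0 (ltW t0)).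
move=> /(ler_wpM2l (powR_ge0 t p)).
have -> : t `^ p * (1 + p * (x / t - 1)) = t `^ p + p * t `^ p * (x - t) / t.
  by field; rewrite gt_eqF.
by [].
Qed.

Lemma eqle (x y : R) : x = y -> x <= y.
Proof. by move=> ->. Qed.

Lemma div_gt0_mul x y : 0 < x * y -> 0 < x / y.
Proof.
move=> H; have [y0|y0|y0] := ltrgtP y 0.
- have x0 : x < 0 by nra.
  have -> : x / y = (- x) / (- y) by rewrite invrN mulrNN.
  by apply: divr_gt0; lra.
- have x0 : 0 < x by nra.
  exact: divr_gt0.
- by move: H; rewrite y0 mulr0 ltxx.
Qed.

Lemma powR_ltr_exp h p q : 1 < h -> p < q -> h `^ p < h `^ q.
Proof.
move=> h1 pq; rewrite /powR gt_eqF ?(lt_trans ltr01 h1) // ltr_expR.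
by rewrite ltr_pM2r // ln_gt0.
Qed.

Definition Kt h p := (h `^ p - h) / ((p - 1) * (h - 1)).
Definition Ku h p := (p - 1) / p * ((h `^ p - 1) / (h `^ p - h)).

Lemma KantE h p : p != 1 -> Kant h p = Kt h p * Ku h p `^ p.
Proof. by move=> /negPf p1; rewrite /Kant p1. Qed.

Lemma Kt_Ku_gt0 h p : 1 < h -> p != 0 -> p != 1 -> 0 < Kt h p /\ 0 < Ku h p.
Proof.
move=> h1 p0 p1; rewrite /Kt /Ku.
have hr1 : h `^ 1 = h by rewrite powRr1 // ltW // (lt_trans ltr01 h1).
have hr0 : h `^ 0 = 1 by rewrite powRr0.
set H := h `^ p.
have [pn|pp|pp] := ltrgtP p 0; last by move: p0; rewrite pp eqxx.
- have Hlt1 : H < 1 by rewrite -hr0 powR_ltr_exp.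
  split.
    apply: div_gt0_mul.
    have : (p - 1) * (h - 1) < 0 by nra.
    nra.
  have : 0 < (p - 1) / p by apply: div_gt0_mul; nra.
  have : 0 < (H - 1) / (H - h) by apply: div_gt0_mul; nra.
  by move=> a b; apply: mulr_gt0.
- have Hgt1 : 1 < H by rewrite -hr0 powR_ltr_exp.
  have [pl|pg|pg] := ltrgtP p 1; last by move: p1; rewrite pg eqxx.
  + have Hlth : H < h by rewrite -[X in _ < X]hr1 powR_ltr_exp.
    split.
      apply: div_gt0_mul.
      have : (p - 1) * (h - 1) < 0 by nra.
      nra.
    have a : (p - 1) / p < 0.
      by rewrite -oppr_gt0 -mulNr; apply: divr_gt0; lra.
    have b : (H - 1) / (H - h) < 0.
      by rewrite -oppr_gt0 -mulrN -invrN opprB; apply: divr_gt0; lra.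
    nra.
  + have Hgth : h < H by rewrite -[X in X < _]hr1 powR_ltr_exp.
    split.
      apply: div_gt0_mul.
      have : 0 < (p - 1) * (h - 1) by nra.
      nra.
    apply: mulr_gt0; apply: divr_gt0; lra.
Qed.

Lemma Kant_gt0 h p : 1 < h -> p != 0 -> 0 < Kant h p.
Proof.
move=> h1 p0; have [->|p1] := eqVneq p 1; first by rewrite /Kant eqxx.
have [a b] := @Kt_Ku_gt0 h p h1 p0 p1.
by rewrite KantE // mulr_gt0 // powR_gt0.
Qed.


Lemma kant_line_aux p a h t : 0 < a -> 1 < h -> 0 < t -> p != 0 -> p != 1 ->
  let T := a / Ku h p in
  Kant h p * (T `^ p + p * T `^ p * (t - T) / T) =
  ((a * h - t) * a `^ p + (t - a) * (a * h) `^ p) / (a * h - a).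
Proof.
move=> a0 h1 t0 p0 p1 T.
have [Kt0 u0] := @Kt_Ku_gt0 h p h1 p0 p1.
have hne : h - 1 != 0 by apply/negP => /eqP; lra.
have TP : T `^ p = a `^ p / Ku h p `^ p.
  rewrite /T powRM ?(ltW a0) ?invr_ge0 ?(ltW u0) //.
  by rewrite -powR_inv1 ?(ltW u0) // -powRrM mulN1r powRN.
rewrite KantE // TP /T.
rewrite powRM ?(ltW a0) ?(ltW (lt_trans ltr01 h1)) //.
have U0 := lt0r_neq0 (powR_gt0 p u0).
move: Kt0 u0 U0; rewrite /Kt /Ku.
set H := h `^ p; set V := (_ `^ p) => Kt0 u0 U0.
have := lt0r_neq0 Kt0; rewrite mulf_eq0 negb_or => /andP[Hh _].
have := lt0r_neq0 u0; rewrite !mulf_eq0 !negb_or invr_eq0 => /andP[/andP[_ pz] /andP[H1 _]].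
have pn : p - 1 != 0 by rewrite subr_eq0.
have ah : a * h - a != 0.
  by rewrite -{2}(mulr1 a) -mulrBr mulf_neq0 // lt0r_neq0.
by field; rewrite ah Hh pz H1 pn U0 hne (lt0r_neq0 a0).
Qed.

Definition chord p a b t := ((b - t) * a `^ p + (t - a) * b `^ p) / (b - a).

Lemma chord_lin p a b t u : a < b -> chord p a b t = chord p a b u + (b `^ p - a `^ p) / (b - a) * (t - u).
Proof.
move=> ab; rewrite /chord; field; rewrite subr_eq0 gt_eqF //.
Qed.

Lemma kant_line_cvx p a h t : 0 < a -> 1 < h -> 0 < t -> cvx p ->
  chord p a (a * h) t <= Kant h p * t `^ p.
Proof.
move=> a0 h1 t0 cp.
have ah : a * h - a != 0.
  by rewrite -{2}(mulr1 a) -mulrBr mulf_neq0 // ?lt0r_neq0 //; rewrite subr_gt0.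
have [->|p1] := eqVneq p 1.
  rewrite /Kant eqxx mul1r /chord !powRr1 ?(ltW t0) ?(ltW a0) //; last first.
    by rewrite mulr_ge0 // ltW // (lt_trans ltr01 h1).
  by apply: eqle; field.
have p0 : p != 0 by case/orP: cp => H; apply/negP => /eqP e; move: H; rewrite e; lra.
have [Kt0 u0] := @Kt_Ku_gt0 h p h1 p0 p1.
rewrite /chord -(@kant_line_aux p a h t) //.
apply: ler_wpM2l; first exact: ltW (@Kant_gt0 h p h1 p0).
apply: tan_cvx => //; exact: divr_gt0.
Qed.

Lemma kant_line_ccv p a h t : 0 < a -> 1 < h -> 0 < t -> 0 < p < 1 ->
  Kant h p * t `^ p <= chord p a (a * h) t.
Proof.
move=> a0 h1 t0 cp.
have p0 : p != 0 by case/andP: cp => H _; rewrite gt_eqF.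
have p1 : p != 1 by case/andP: cp => _ H; rewrite lt_eqF.
have [Kt0 u0] := @Kt_Ku_gt0 h p h1 p0 p1.
rewrite /chord -(@kant_line_aux p a h t) //.
apply: ler_wpM2l; first exact: ltW (@Kant_gt0 h p h1 p0).
apply: tan_ccv => //; [exact: ltW | exact: divr_gt0].
Qed.

Lemma powR_le_pos r x y : 0 <= r -> 0 <= x -> x <= y -> x `^ r <= y `^ r.
Proof.
move=> r0 x0 xy; apply: (ge0_ler_powR r0) => //; rewrite nnegrE //.
exact: le_trans xy.
Qed.

Lemma powR_le_neg r x y : r < 0 -> 0 < x -> x <= y -> y `^ r <= x `^ r.
Proof.
move=> r0 x0 xy; have y0 : 0 < y := lt_le_trans x0 xy.
have -> : r = - (- r) by rewrite opprK.
rewrite (powRN y) (powRN x) lef_pV2 ?posrE ?powR_gt0 //.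
apply: powR_le_pos => //; [rewrite oppr_ge0; exact: ltW | exact: ltW].
Qed.

Lemma powRK p x : p != 0 -> 0 <= x -> (x `^ p) `^ p^-1 = x.
Proof. by move=> p0 x0; rewrite -powRrM mulfV // powRr1. Qed.

Lemma powRMK p k x : p != 0 -> 0 <= k -> 0 <= x -> (k * x `^ p) `^ p^-1 = k `^ p^-1 * x.
Proof. by move=> p0 k0 x0; rewrite powRM ?powR_ge0 // powRK. Qed.

Definition lo p k := if 1 <= p then 1 else k `^ p^-1.
Definition hi p k := if 1 <= p then k `^ p^-1 else 1.

Section Weighted.
Variable J : finType.
Variables (w x : J -> R) (a b : R).
Hypothesis w0 : forall j, 0 <= w j.
Hypothesis w1 : \sum_j w j = 1.
Hypothesis a0 : 0 < a.
Hypothesis ab : a < b.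
Hypothesis xab : forall j, a <= x j <= b.

Local Notation s := (\sum_j w j * x j).

Lemma s_ge_a : a <= s.
Proof.
have -> : a = \sum_j w j * a by rewrite -mulr_suml w1 mul1r.
apply: ler_sum => j _; apply: ler_wpM2l => //; by case/andP: (xab j).
Qed.

Lemma s_le_b : s <= b.
Proof.
have -> : b = \sum_j w j * b by rewrite -mulr_suml w1 mul1r.
apply: ler_sum => j _; apply: ler_wpM2l => //; by case/andP: (xab j).
Qed.

Lemma x_gt0 j : 0 < x j.
Proof. by case/andP: (xab j) => h _; apply: lt_le_trans a0 h. Qed.

Lemma lin_sum (S c t : R) :
  \sum_j w j * (S + c * (x j - t)) = S + c * (s - t).
Proof.
have -> : \sum_j w j * (S + c * (x j - t)) =
   S * \sum_j w j + c * (\sum_j w j * x j) - c * t * \sum_j w j.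
  rewrite !mulr_sumr -big_split -sumrB /=; apply: eq_bigr => j _; ring.
by rewrite w1; ring.
Qed.

Lemma jensen_cvx p : cvx p -> s `^ p <= \sum_j w j * x j `^ p.
Proof.
move=> cp; have s0 : 0 < s := lt_le_trans a0 s_ge_a.
have := @lin_sum (s `^ p) (p * s `^ p / s) s.
rewrite subrr mulr0 addr0 => <-.
apply: ler_sum => j _; apply: ler_wpM2l => //.
have := @tan_cvx p (x j) s cp (x_gt0 j) s0.
by have -> : p * s `^ p / s * (x j - s) = p * s `^ p * (x j - s) / s by field; rewrite gt_eqF.
Qed.

Lemma jensen_ccv p : 0 < p < 1 -> \sum_j w j * x j `^ p <= s `^ p.
Proof.
move=> cp; have s0 : 0 < s := lt_le_trans a0 s_ge_a.
have := @lin_sum (s `^ p) (p * s `^ p / s) s.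
rewrite subrr mulr0 addr0 => <-.
apply: ler_sum => j _; apply: ler_wpM2l => //.
have := @tan_ccv p (x j) s cp (ltW (x_gt0 j)) s0.
by have -> : p * s `^ p / s * (x j - s) = p * s `^ p * (x j - s) / s by field; rewrite gt_eqF.
Qed.



Lemma chord_cvx p y : cvx p -> a <= y <= b -> y `^ p <= chord p a b y.
Proof.
move=> cp /andP[ay yb]; have y0 : 0 < y by apply: lt_le_trans a0 ay.
have b0 : 0 < b by apply: lt_trans a0 ab.
rewrite /chord ler_pdivlMr ?subr_gt0 //.
have t1 := @tan_cvx p a y cp a0 y0.
have t2 := @tan_cvx p b y cp b0 y0.
set c := p * y `^ p / y.
have e1 : y `^ p + p * y `^ p * (a - y) / y = y `^ p + c * (a - y).
  by rewrite /c; field; rewrite gt_eqF.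
have e2 : y `^ p + p * y `^ p * (b - y) / y = y `^ p + c * (b - y).
  by rewrite /c; field; rewrite gt_eqF.
rewrite e1 in t1; rewrite e2 in t2.
have h1' : (b - y) * (y `^ p + c * (a - y)) <= (b - y) * a `^ p.
  move: yb; rewrite le_eqVlt => /predU1P[->|yb]; first by rewrite subrr !mul0r.
  by apply: ler_wpM2l => //; lra.
have h2' : (y - a) * (y `^ p + c * (b - y)) <= (y - a) * b `^ p.
  move: ay; rewrite le_eqVlt => /predU1P[->|ay]; first by rewrite subrr !mul0r.
  by apply: ler_wpM2l => //; lra.
apply: le_trans (lerD h1' h2'); apply: eqle; ring.
Qed.

Lemma chord_ccv p y : 0 < p < 1 -> a <= y <= b -> chord p a b y <= y `^ p.
Proof.
move=> cp /andP[ay yb]; have y0 : 0 < y by apply: lt_le_trans a0 ay.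
have b0 : 0 < b by apply: lt_trans a0 ab.
rewrite /chord ler_pdivrMr ?subr_gt0 //.
have t1 := @tan_ccv p a y cp (ltW a0) y0.
have t2 := @tan_ccv p b y cp (ltW b0) y0.
set c := p * y `^ p / y.
have e1 : y `^ p + p * y `^ p * (a - y) / y = y `^ p + c * (a - y).
  by rewrite /c; field; rewrite gt_eqF.
have e2 : y `^ p + p * y `^ p * (b - y) / y = y `^ p + c * (b - y).
  by rewrite /c; field; rewrite gt_eqF.
rewrite e1 in t1; rewrite e2 in t2.
have h1' : (b - y) * a `^ p <= (b - y) * (y `^ p + c * (a - y)).
  move: yb; rewrite le_eqVlt => /predU1P[->|yb]; first by rewrite subrr !mul0r.
  by apply: ler_wpM2l => //; lra.
have h2' : (y - a) * b `^ p <= (y - a) * (y `^ p + c * (b - y)).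
  move: ay; rewrite le_eqVlt => /predU1P[->|ay]; first by rewrite subrr !mul0r.
  by apply: ler_wpM2l => //; lra.
apply: le_trans (lerD h1' h2') _; apply: eqle; ring.
Qed.

Lemma sum_chord p : \sum_j w j * chord p a b (x j) = chord p a b s.
Proof.
rewrite (eq_bigr (fun j => w j * (chord p a b s +
   (b `^ p - a `^ p) / (b - a) * (x j - s)))); last first.
  by move=> j _; rewrite (@chord_lin p a b (x j) s ab).
by rewrite lin_sum subrr mulr0 addr0.
Qed.

Lemma hba : 1 < b / a.
Proof. by rewrite ltr_pdivlMr // mul1r. Qed.

Lemma abh : a * (b / a) = b.
Proof. by field; rewrite gt_eqF. Qed.

Lemma kant_cvx p : cvx p -> \sum_j w j * x j `^ p <= Kant (b / a) p * s `^ p.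
Proof.
move=> cp; have s0 : 0 < s := lt_le_trans a0 s_ge_a.
apply: (@le_trans _ _ (\sum_j w j * chord p a b (x j))).
  apply: ler_sum => j _; apply: ler_wpM2l => //; exact: chord_cvx.
rewrite sum_chord.
have := @kant_line_cvx p a (b / a) s a0 hba s0 cp.
by rewrite abh.
Qed.

Lemma kant_ccv p : 0 < p < 1 -> Kant (b / a) p * s `^ p <= \sum_j w j * x j `^ p.
Proof.
move=> cp; have s0 : 0 < s := lt_le_trans a0 s_ge_a.
apply: (@le_trans _ _ (\sum_j w j * chord p a b (x j))); last first.
  apply: ler_sum => j _; apply: ler_wpM2l => //; exact: chord_ccv.
rewrite sum_chord.
have := @kant_line_ccv p a (b / a) s a0 hba s0 cp.
by rewrite abh.
Qed.

Lemma term_bounds p : p != 0 ->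
  lo p (Kant (b / a) p) * s <= (\sum_j w j * x j `^ p) `^ p^-1 <=
  hi p (Kant (b / a) p) * s.
Proof.
move=> p0; have s0 : 0 < s := lt_le_trans a0 s_ge_a.
set K := Kant (b / a) p; set E := \sum_j w j * x j `^ p.
have K0 : 0 < K := @Kant_gt0 (b / a) p hba p0.
have E0 : 0 <= E by apply: sumr_ge0 => j _; rewrite mulr_ge0 ?powR_ge0.
have sp0 : 0 < s `^ p := powR_gt0 p s0.
rewrite /lo /hi; case: ifPn => p1.
  have cp : cvx p by rewrite /cvx p1 orbT.
  have p0' : 0 <= p^-1 by rewrite invr_ge0; lra.
  rewrite mul1r; apply/andP; split.
    rewrite -{1}(@powRK p s p0 (ltW s0)); apply: powR_le_pos => //; first exact: ltW.
    exact: jensen_cvx.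
  rewrite -(@powRMK p K s p0 (ltW K0) (ltW s0)); apply: powR_le_pos => //.
  exact: kant_cvx.
rewrite mul1r; have [pn|pp] := ltP p 0.
  have cp : cvx p by rewrite /cvx pn.
  have pn' : p^-1 < 0 by rewrite invr_lt0.
  apply/andP; split.
    rewrite -(@powRMK p K s p0 (ltW K0) (ltW s0)); apply: powR_le_neg => //.
      exact: lt_le_trans sp0 (@jensen_cvx p cp).
    exact: kant_cvx.
  rewrite -[X in _ <= X](@powRK p s p0 (ltW s0)); apply: powR_le_neg => //.
  exact: jensen_cvx.
have cp : 0 < p < 1 by rewrite lt_neqAle eq_sym p0 pp /=; rewrite ltNge.
have p0' : 0 <= p^-1 by rewrite invr_ge0.
apply/andP; split.
  rewrite -(@powRMK p K s p0 (ltW K0) (ltW s0)); apply: powR_le_pos => //.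
    by rewrite mulr_ge0 // ltW.
  exact: kant_ccv.
rewrite -[X in _ <= X](@powRK p s p0 (ltW s0)); apply: powR_le_pos => //.
exact: jensen_ccv.
Qed.

End Weighted.
Section Core.
Variables (n d : nat) (a b p : R).
Variables (lam : 'I_n -> 'I_d -> R) (wt : 'I_d -> 'I_n -> 'I_d -> R).
Hypothesis a0 : 0 < a.
Hypothesis ab : a < b.
Hypothesis p0 : p != 0.
Hypothesis lamab : forall i j, a <= lam i j <= b.
Hypothesis wt0 : forall k i j, 0 <= wt k i j.
Hypothesis wtr : forall k i, \sum_j wt k i j = 1.
Hypothesis wtc : forall i j, \sum_k wt k i j = 1.

Definition Phi := \sum_k (\sum_i \sum_j wt k i j * lam i j `^ p) `^ p^-1.
Definition Tsum := \sum_i \sum_j lam i j.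
Definition cst := n%:R `^ p^-1 / n%:R.

Lemma core_bounds :
  lo p (Kant (b / a) p) * (cst * Tsum) <= Phi <= hi p (Kant (b / a) p) * (cst * Tsum).
Proof.
set K := Kant (b / a) p.
have hab : 1 < b / a by rewrite ltr_pdivlMr // mul1r.
have K0 : 0 < K := @Kant_gt0 (b / a) p hab p0.
rewrite /Phi /Tsum /cst.
case: n lam wt lamab wt0 wtr wtc => [|n'] lam' wt' lamab' wt0' wtr' wtc'.
  rewrite big_ord0 !mulr0.
  rewrite big1 ?lexx // => k _; rewrite big_ord0 powR0 //; by rewrite invr_eq0.
set N := n'.+1.
have N0 : 0 < N%:R :> R by rewrite ltr0n.
pose w k (ij : 'I_N * 'I_d) := wt' k ij.1 ij.2 / N%:R.
pose x (ij : 'I_N * 'I_d) := lam' ij.1 ij.2.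
have w0 k ij : 0 <= w k ij by rewrite /w divr_ge0 // ltW.
have w1 k : \sum_ij w k ij = 1.
  rewrite -(pair_big xpredT xpredT (fun i j => wt' k i j / N%:R)) /=.
  rewrite (eq_bigr (fun=> N%:R^-1)); last first.
    by move=> i _; rewrite -mulr_suml wtr' mul1r.
  by rewrite sumr_const card_ord -[X in X *+ _]mulr1 -mulrnAr mulVf // gt_eqF.
have xab ij : a <= x ij <= b by exact: lamab'.
have inner k : \sum_i \sum_j wt' k i j * lam' i j `^ p =
               N%:R * \sum_ij w k ij * x ij `^ p.
  rewrite (pair_big xpredT xpredT (fun i j => wt' k i j * lam' i j `^ p)) /=.
  rewrite mulr_sumr; apply: eq_bigr => ij _; rewrite /w /x; by field; rewrite gt_eqF.
have ssum : \sum_k \sum_ij w k ij * x ij = (\sum_i \sum_j lam' i j) / N%:R.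
  rewrite exchange_big /= (pair_big xpredT xpredT (fun i j => lam' i j)) /=.
  rewrite mulr_suml; apply: eq_bigr => ij _.
  rewrite /w /x -mulr_suml -mulr_suml wtc' mul1r; by rewrite mulrC.
have term k : (\sum_i \sum_j wt' k i j * lam' i j `^ p) `^ p^-1 =
    N%:R `^ p^-1 * (\sum_ij w k ij * x ij `^ p) `^ p^-1.
  rewrite inner powRM //.
  by apply: sumr_ge0 => ij _; rewrite mulr_ge0 ?powR_ge0.
have tb k := @term_bounds _ (w k) x a b (w0 k) (w1 k) a0 ab xab p p0.
have Np : 0 <= N%:R `^ p^-1 :> R by apply: powR_ge0.
rewrite (eq_bigr _ (fun k _ => term k)).
have -> : N%:R `^ p^-1 / N%:R * (\sum_i \sum_j lam' i j) = \sum_k N%:R `^ p^-1 * \sum_ij w k ij * x ij.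
  by rewrite -mulr_sumr ssum; field; rewrite gt_eqF.
rewrite !mulr_sumr; apply/andP; split; apply: ler_sum => k _.
  have /andP[h1 _] := tb k.
  rewrite mulrCA; apply: ler_wpM2l => //.
have /andP[_ h2] := tb k.
rewrite mulrCA; apply: ler_wpM2l => //.
Qed.

End Core.

End Scalar.


Section Mat.
Variable R : realType.
Local Notation C := R[i].
Variable d : nat.
Implicit Types X Y M : 'M[C]_d.

Definition Um X := spectralmx X.
Definition ev X (j : 'I_d) : R := complex.Re (spectral_diag X 0 j).

Lemma Re_ofR_mul (x : R) (z : C) : complex.Re (ofR x * z) = x * complex.Re z.
Proof. case: z => u v /=; ring. Qed.

Lemma conj_ofR (x : R) : Num.conj (ofR x) = ofR x.
Proof. exact: conjc_real. Qed.

Lemma herm_eq M : M \is hermsymmx -> M = M^t*.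
Proof. by move=> /is_hermitianmxP; rewrite expr0 scale1r. Qed.

Lemma herm_of M : M = M^t* -> M \is hermsymmx.
Proof. by move=> e; apply/is_hermitianmxP; rewrite expr0 scale1r. Qed.

Lemma spec_decomp X : X \is hermsymmx ->
  X = invmx (Um X) *m diag_mx (spectral_diag X) *m Um X.
Proof. by move=> /hermitian_normalmx /orthomx_spectralP. Qed.

Lemma Um_unitary X : Um X \is unitarymx.
Proof. exact: spectral_unitarymx. Qed.

Lemma UXU X : X \is hermsymmx -> Um X *m X *m (Um X)^t* = diag_mx (spectral_diag X).
Proof.
move=> hX; rewrite {2}(@spec_decomp X hX) invmx_unitary ?Um_unitary //.
rewrite !mulmxA (unitarymxP (@Um_unitary X)) mul1mx -mulmxA.
by rewrite (unitarymxP (@Um_unitary X)) mulmx1.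
Qed.

Lemma sd_entry X k : X \is hermsymmx ->
  spectral_diag X 0 k = (Um X *m X *m (Um X)^t*) k k.
Proof. by move=> hX; rewrite UXU // mxE eqxx mulr1n. Qed.

Lemma mpow_tr X q : \tr (mpow X q) = \sum_j ofR (ev X j `^ q).
Proof.
rewrite /mpow mxtrace_mulC mulmxA mulmxV ?spectral_unit // mul1mx mxtrace_diag.
by apply: eq_bigr => j _; rewrite mxE.
Qed.

Lemma tr_ev X : X \is hermsymmx -> complex.Re (\tr X) = \sum_j ev X j.
Proof.
move=> hX; rewrite {1}(@spec_decomp X hX) mxtrace_mulC mulmxA mulmxV ?spectral_unit //.
rewrite mul1mx mxtrace_diag raddf_sum /=.
by [].
Qed.

Lemma mxBE m n (A B : 'M[C]_(m, n)) i j : (A - B) i j = A i j - B i j.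
Proof. by rewrite !mxE. Qed.

Definition qf M (v : 'rV[C]_d) := (v *m M *m v^t*) 0 0.

Lemma qf_row M (U : 'M[C]_d) k : (U *m M *m U^t*) k k = qf M (row k U).
Proof.
rewrite /qf !mxE; apply: eq_bigr => l _; rewrite !mxE; congr (_ * _).
by apply: eq_bigr => m _; rewrite !mxE.
Qed.

Lemma qfD M1 M2 v : qf (M1 + M2) v = qf M1 v + qf M2 v.
Proof. by rewrite /qf mulmxDr mulmxDl mxE. Qed.

Lemma UaU (U : 'M[C]_d) (a : R) k : U \is unitarymx ->
  (U *m (ofR a)%:M *m U^t*) k k = ofR a.
Proof.
move=> hU; rewrite mul_mx_scalar -scalemxAl (unitarymxP hU) mxE mxE eqxx mulr1n.
by rewrite mulr1.
Qed.

Lemma ev_lb X a : X \is hermsymmx ->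
  (forall v, 0 <= qf (X - (ofR a)%:M) v) -> forall j, a <= ev X j.
Proof.
move=> hX H j; have := H (row j (Um X)); rewrite -qf_row mulmxBr mulmxBl mxBE.
rewrite UaU ?Um_unitary // -sd_entry // lecE => /andP[_].
by rewrite raddfB /= subr_ge0.
Qed.

Lemma ev_ub X b : X \is hermsymmx ->
  (forall v, 0 <= qf ((ofR b)%:M - X) v) -> forall j, ev X j <= b.
Proof.
move=> hX H j; have := H (row j (Um X)); rewrite -qf_row mulmxBr mulmxBl mxBE.
rewrite UaU ?Um_unitary // -sd_entry // lecE => /andP[_].
by rewrite raddfB /= subr_ge0.
Qed.

Lemma herm_add M1 M2 : M1 \is hermsymmx -> M2 \is hermsymmx -> M1 + M2 \is hermsymmx.
Proof.
move=> /herm_eq h1 /herm_eq h2; apply: herm_of.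
by rewrite linearD /= map_mxD -h1 -h2.
Qed.

Lemma herm0 : (0 : 'M[C]_d) \is hermsymmx.
Proof. by apply: herm_of; rewrite trmx0 map_mx0. Qed.

Lemma herm_sum n (F : 'I_n -> 'M[C]_d) : (forall i, F i \is hermsymmx) ->
  \sum_i F i \is hermsymmx.
Proof.
move=> H; apply: (big_ind (fun M => M \is hermsymmx)) => //.
- exact: herm0.
- by move=> ? ?; apply: herm_add.
Qed.

Lemma mpow_herm X q : mpow X q \is hermsymmx.
Proof.
apply: herm_of; rewrite /mpow invmx_unitary ?Um_unitary //.
rewrite !trmx_mul !map_mxM trmxCK tr_diag_mx map_diag_mx mulmxA.
congr (_ *m _ *m _); congr diag_mx; apply/rowP => j; rewrite !mxE.
by symmetry; apply: conj_ofR.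
Qed.

Definition Wm Y X := Um Y *m (Um X)^t*.
Definition wt Y X k l := complex.Re (Wm Y X k l * (Wm Y X k l)^*).

Lemma Wm_unitary Y X : Wm Y X \is unitarymx.
Proof. by rewrite /Wm mul_unitarymx ?Um_unitary // trmxC_unitary Um_unitary. Qed.

Lemma wt_ge0 Y X k l : 0 <= wt Y X k l.
Proof.
have := mul_conjC_ge0 (Wm Y X k l); rewrite lecE => /andP[_].
by rewrite /wt.
Qed.

Lemma wt_row Y X k : \sum_l wt Y X k l = 1.
Proof.
have := unitarymxP (Wm_unitary Y X) => /matrixP /(_ k k).
rewrite !mxE eqxx mulr1n => e.
rewrite /wt -raddf_sum /=.
have -> : \sum_l Wm Y X k l * (Wm Y X k l)^* = 1.
  by rewrite -e; apply: eq_bigr => l _; rewrite !mxE.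
by [].
Qed.

Lemma wt_col Y X l : \sum_k wt Y X k l = 1.
Proof.
have hU : (Wm Y X)^t* \is unitarymx by rewrite trmxC_unitary Wm_unitary.
have := unitarymxP hU => /matrixP /(_ l l).
rewrite trmxCK !mxE eqxx mulr1n => e.
rewrite /wt -raddf_sum /=.
have -> : \sum_k Wm Y X k l * (Wm Y X k l)^* = 1.
  by rewrite -e; apply: eq_bigr => k _; rewrite !mxE mulrC.
by [].
Qed.

Lemma mpow_entry Y X q k :
  complex.Re ((Um Y *m mpow X q *m (Um Y)^t*) k k) =
  \sum_l wt Y X k l * ev X l `^ q.
Proof.
have -> : Um Y *m mpow X q *m (Um Y)^t* =
    Wm Y X *m diag_mx (\row_j ofR (ev X j `^ q)) *m (Wm Y X)^t*.
  rewrite /mpow /Wm invmx_unitary ?Um_unitary // trmx_mul map_mxM trmxCK.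
  by rewrite !mulmxA.
rewrite mxE raddf_sum /=; apply: eq_bigr => l _.
rewrite mul_mx_diag !mxE /wt -mulrA mulrC -mulrA Re_ofR_mul mulrC.
rewrite [RHS]mulrC; congr (_ * _); by rewrite /Wm !mxE.
Qed.

Lemma ofRD (x y : R) : ofR (x + y) = ofR x + ofR y.
Proof. by rewrite /ofR; apply/eqP; rewrite eq_complex /= addr0 !eqxx. Qed.

Lemma ofRM (x y : R) : ofR (x * y) = ofR x * ofR y.
Proof. by rewrite /ofR; apply/eqP; rewrite eq_complex /= !mulr0 !mul0r subr0 addr0 !eqxx. Qed.

Lemma ofR0 : ofR 0 = 0 :> C.
Proof. by []. Qed.

Lemma ofR_sum n (F : 'I_n -> R) : \sum_i ofR (F i) = ofR (\sum_i F i).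
Proof. by apply: esym; apply: (big_morph (@ofR R)); [exact: ofRD|exact: ofR0]. Qed.

Lemma ev_Y n (Xs : 'I_n -> 'M[C]_d) q k :
  ev (\sum_i mpow (Xs i) q) k =
  \sum_i \sum_l wt (\sum_i mpow (Xs i) q) (Xs i) k l * ev (Xs i) l `^ q.
Proof.
set Y := \sum_i mpow (Xs i) q.
have hY : Y \is hermsymmx by apply: herm_sum => i; apply: mpow_herm.
rewrite /ev sd_entry // {2}/Y mulmx_sumr mulmx_suml summxE raddf_sum /=.
by apply: eq_bigr => i _; rewrite mpow_entry.
Qed.

Lemma trpow_eq n (Xs : 'I_n -> 'M[C]_d) p :
  trpow Xs p = ofR (\sum_k (\sum_i \sum_l wt (\sum_i mpow (Xs i) p) (Xs i) k l
                               * ev (Xs i) l `^ p) `^ p^-1).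
Proof.
rewrite /trpow mpow_tr -ofR_sum; apply: eq_bigr => k _; by rewrite ev_Y.
Qed.

Lemma Tsum_add n (A B : 'I_n -> 'M[C]_d) :
  (forall i, A i \is hermsymmx) -> (forall i, B i \is hermsymmx) ->
  \sum_i \sum_j ev (A i + B i) j =
  \sum_i \sum_j ev (A i) j + \sum_i \sum_j ev (B i) j.
Proof.
move=> hA hB; rewrite -big_split; apply: eq_bigr => i _ /=.
by rewrite -!tr_ev ?herm_add // mxtraceD raddfD.
Qed.

End Mat.


Section Comb.
Variable R : realType.

Lemma combine (p K a1 b1 PA PB PAB : R) : p != 0 -> 0 < K -> (p = 1 -> K = 1) ->
  lo p K * a1 <= PA <= hi p K * a1 -> lo p K * b1 <= PB <= hi p K * b1 ->
  lo p K * (a1 + b1) <= PAB <= hi p K * (a1 + b1) ->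
  (p <= 1 -> K `^ p^-1 * (PA + PB) <= PAB /\ PAB <= K `^ (- p^-1) * (PA + PB)) /\
  (1 <= p -> K `^ (- p^-1) * (PA + PB) <= PAB /\ PAB <= K `^ p^-1 * (PA + PB)).
Proof.
move=> p0 K0 K1 hA hB hAB.
rewrite powRN; set X := K `^ p^-1.
have X0 : 0 < X by rewrite powR_gt0.
have big : 1 <= p -> X^-1 * (PA + PB) <= PAB /\ PAB <= X * (PA + PB).
  move=> p1; move: hA hB hAB; rewrite /lo /hi p1 -/X !mul1r.
  move=> /andP[a1l a1u] /andP[b1l b1u] /andP[abl abu].
  split.
    rewrite ler_pdivrMl //; nra.
  nra.
split => // p1.
have [pe|pl] := eqVneq p 1.
  have XE : X = 1 by rewrite /X K1 // powR1.
  have [u v] : X^-1 * (PA + PB) <= PAB /\ PAB <= X * (PA + PB) by apply: big; rewrite pe.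
  by move: u v; rewrite XE invr1.
have plt : p < 1 by rewrite lt_neqAle pl p1.
have np1 : (1 <= p) = false by apply/negbTE; rewrite -ltNge.
move: hA hB hAB; rewrite /lo /hi np1 -/X !mul1r.
move=> /andP[a1l a1u] /andP[b1l b1u] /andP[abl abu].
split; first nra.
rewrite ler_pdivlMl //; nra.
Qed.

End Comb.


Theorem corollary4p9 (R : realType) (d n : nat)
  (A B : 'I_n -> 'M[R[i]]_d) (m M : R) :
  0 < m -> m < M ->
  (forall i, pdmx (A i)) -> (forall i, pdmx (B i)) ->
  (forall i, loewner_le (ofR m)%:M (A i) /\ loewner_le (A i) (ofR M)%:M) ->
  (forall i, loewner_le (ofR m)%:M (B i) /\ loewner_le (B i) (ofR M)%:M) ->
  let h := M / m in
  (forall p : R, p <= 1 -> p != 0 ->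
     ofR (powR (Kant h p) p^-1) * (trpow A p + trpow B p)
       <= trpow (fun i => A i + B i) p /\
     trpow (fun i => A i + B i) p
       <= ofR (powR (Kant h p) (- p^-1)) * (trpow A p + trpow B p)) /\
  (forall p : R, 1 <= p ->
     ofR (powR (Kant h p) (- p^-1)) * (trpow A p + trpow B p)
       <= trpow (fun i => A i + B i) p /\
     trpow (fun i => A i + B i) p
       <= ofR (powR (Kant h p) p^-1) * (trpow A p + trpow B p)).
Proof.
move=> m0 mM hA hB bA bB h.
have hermA i : A i \is hermsymmx := (hA i).1.
have hermB i : B i \is hermsymmx := (hB i).1.
have hermAB i : A i + B i \is hermsymmx := herm_add (hermA i) (hermB i).
have lamA i j : m <= ev (A i) j <= M.
  apply/andP; split.
    by apply: (ev_lb (hermA i)) => v; exact: ((bA i).1).2 v.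
  by apply: (ev_ub (hermA i)) => v; exact: ((bA i).2).2 v.
have lamB i j : m <= ev (B i) j <= M.
  apply/andP; split.
    by apply: (ev_lb (hermB i)) => v; exact: ((bB i).1).2 v.
  by apply: (ev_ub (hermB i)) => v; exact: ((bB i).2).2 v.
have lamAB i j : m + m <= ev (A i + B i) j <= M + M.
  apply/andP; split.
    apply: (ev_lb (hermAB i)) => v.
    have -> : A i + B i - (ofR (m + m))%:M =
        (A i - (ofR m)%:M) + (B i - (ofR m)%:M).
      by rewrite ofRD raddfD /= opprD addrACA.
    by rewrite qfD addr_ge0 //; [exact: ((bA i).1).2 v | exact: ((bB i).1).2 v].
  apply: (ev_ub (hermAB i)) => v.
  have -> : (ofR (M + M))%:M - (A i + B i) =
      ((ofR M)%:M - A i) + ((ofR M)%:M - B i).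
    by rewrite ofRD raddfD /= opprD addrACA.
  by rewrite qfD addr_ge0 //; [exact: ((bA i).2).2 v | exact: ((bB i).2).2 v].
have main p : p != 0 ->
  (p <= 1 -> ofR (powR (Kant h p) p^-1) * (trpow A p + trpow B p)
       <= trpow (fun i => A i + B i) p /\
     trpow (fun i => A i + B i) p
       <= ofR (powR (Kant h p) (- p^-1)) * (trpow A p + trpow B p)) /\
  (1 <= p -> ofR (powR (Kant h p) (- p^-1)) * (trpow A p + trpow B p)
       <= trpow (fun i => A i + B i) p /\
     trpow (fun i => A i + B i) p
       <= ofR (powR (Kant h p) p^-1) * (trpow A p + trpow B p)).
  move=> p0.
  pose YA := \sum_i mpow (A i) p.
  pose WA k (i : 'I_n) j := wt YA (A i) k j.
  have wA0 k i j : 0 <= WA k i j by apply: wt_ge0.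
  have wAr k i : \sum_j WA k i j = 1 by apply: wt_row.
  have wAc i j : \sum_k WA k i j = 1 by apply: wt_col.
  have cA := @core_bounds R n d m M p (fun i j => ev (A i) j) WA m0 mM p0 lamA wA0 wAr wAc.
  pose YB := \sum_i mpow (B i) p.
  pose WB k (i : 'I_n) j := wt YB (B i) k j.
  have wB0 k i j : 0 <= WB k i j by apply: wt_ge0.
  have wBr k i : \sum_j WB k i j = 1 by apply: wt_row.
  have wBc i j : \sum_k WB k i j = 1 by apply: wt_col.
  have cB := @core_bounds R n d m M p (fun i j => ev (B i) j) WB m0 mM p0 lamB wB0 wBr wBc.
  have m20 : 0 < m + m := addr_gt0 m0 m0.
  have mM2 : m + m < M + M := ltrD mM mM.
  pose YAB := \sum_i mpow (A i + B i) p.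
  pose WAB k (i : 'I_n) j := wt YAB (A i + B i) k j.
  have wAB0 k i j : 0 <= WAB k i j by apply: wt_ge0.
  have wABr k i : \sum_j WAB k i j = 1 by apply: wt_row.
  have wABc i j : \sum_k WAB k i j = 1 by apply: wt_col.
  have cAB := @core_bounds R n d (m + m) (M + M) p (fun i j => ev (A i + B i) j) WAB
     m20 mM2 p0 lamAB wAB0 wABr wABc.
  have mne : m != 0 := lt0r_neq0 m0.
  have m2ne : m + m != 0 := lt0r_neq0 m20.
  have hh : (M + M) / (m + m) = h by rewrite /h; field; rewrite ?mne ?m2ne ?andbT.

  rewrite hh /Tsum Tsum_add // mulrDr in cAB.
  have h1 : 1 < h by rewrite /h ltr_pdivlMr // mul1r.
  have K0 := Kant_gt0 h1 p0.
  have K1 : p = 1 -> Kant h p = 1 by move=> ->; rewrite /Kant eqxx.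
  have [c1 c2] := combine p0 K0 K1 cA cB cAB.
  rewrite !trpow_eq -ofRD -!ofRM.
  split => hp.
    by have [u v] := c1 hp; split; rewrite lecR.
  by have [u v] := c2 hp; split; rewrite lecR.
split.
  move=> p p1 p0; exact: (main p p0).1 p1.
move=> p p1; have p0 : p != 0 by rewrite gt_eqF // (lt_le_trans ltr01 p1).
exact: (main p p0).2 p1.
Qed.
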